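(* Let $n=n_1n_2\cdots n_\ell>2$ with integers $n_i\ge 2$, and let $U=F_{(n_1,\dots,n_\ell)}=F_{n_1}\otimes\cdots\otimes F_{n_\ell}$ (with modes labelled as in the context). Consider the $n$-photon distillation protocol determined by $U$ with input state $\rho^{(n)}(\epsilon)$ (uniform random source model with any fixed $R\ge 1$, or its orthogonal-bad-bits limit). Then the output error rate satisfies $$e_n(\epsilon)=\frac{\epsilon}{n}+O(\epsilon^2)\qquad(\epsilon\to 0,\ n\text{ fixed}).$$ In particular this applies to $U=F_n$ ($n\ge 3$) and to $U=H_n=H^{\otimes r}$ ($n=2^r\ge 4$, $H$ the $2\times 2$ Hadamard matrix).
   Context: For an integer $m\ge 2$, $F_m=\frac{1}{\sqrt m}(\omega_m^{ij})_{0\le i,j\le m-1}$ with $\omega_m=e^{2\pi i/m}$; note $F_2=H$. The $n=n_1\cdots n_\ell$ modes of $F_{(n_1,\dots,n_\ell)}$ are labelled $0,\dots,n-1$ by identifying the basis vector $|m_1\rangle\otimes\cdots\otimes|m_\ell\rangle$ ($0\le m_i<n_i$) of $\mathbb{C}^{n_1}\otimes\cdots\otimes\mathbb{C}^{n_\ell}$ with mode $m_1+n_1m_2+n_1n_2m_3+\cdots+(n_1\cdots n_{\ell-1})m_\ell$. Photons: each photon has an external mode in $\{0,\dots,n-1\}$ and an internal state in a Hilbert space $\mathcal{H}_{\rm int}$ with fixed orthonormal basis $\{|\xi_0\rangle,|\xi_1\rangle,\dots\}$. $a_i^\dagger[\xi]$ creates a (bosonic) photon in mode $i$ with internal state $\xi$;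 $|\vec 0\rangle$ is the vacuum. For an $n\times n$ unitary $U$, the linear optical unitary $\hat U$ acts on the external modes only: $a_j^\dagger[\xi]\mapsto\sum_i U_{ij}a_i^\dagger[\xi]$. $|s_0,\dots,s_{n-1}\rangle$ denotes the Fock state (no internal degrees of freedom) with $s_i$ photons in mode $i$; $|1,\dots,1\rangle$ has one photon in each mode. Photon-number-resolving detection (PNRD) on a set of modes measures the number of photons in each of those modes, regardless of internal state. Ideal patterns of $U$: tuples $(s_0,\dots,s_{n-1})$ of nonnegative integers with $\sum s_i=n$, $s_0=1$ and $\langle s_0,\dots,s_{n-1}|\hat U|1,\dots,1\rangle\ne 0$. Distillation protocol for $U$ with input state $\sigma$ (a state of $n$ photons in $n$ distinct modes): apply $\hat U$; perform PNRD on modes $1,\dots,n-1$, getting $(s_1,\dots,s_{n-1})$; set $s_0=n-\sum_{j\ge1}s_j$; the protocol heralds success iff $(s_0,\dots,s_{n-1})$ is an ideal pattern. The heralding rate $h_n(\sigma)$ is the probability of success. The output error rate $e_n(\sigma)$ is the conditional probability, given success, that the single photon in mode $0$ has internal state $|\xi_i\rangle$ for some $i\ge1$ (computed via the projective measurement onto the normalized states $a^\dagger_{m_0}[\xi_{i_0}]\cdots a^\dagger_{m_{n-1}}[\xi_{i_{n-1}}]|\vec 0\rangle$). Input model: $\rho^{(n)}(\epsilon)$ is the mixture over states $a_0^\dagger[\xi_{j_0}]\cdots a_{n-1}^\dagger[\xi_{j_{n-1}}]|\vec0\rangle$ in which the photon in mode $i$ independently has internal state $\xi_0$ with probability $1-\epsilon$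 and otherwise an error state: in the uniform random source (URS) model with parameter $R\ge1$, each $\xi_j$, $1\le j\le R$, with probability $\epsilon/R$; in the orthogonal-bad-bits (OBB) limit, the photon in mode $i$ has state $\xi_{i+1}$ with probability $\epsilon$. Write $h_n(\epsilon)=h_n(\rho^{(n)}(\epsilon))$ and $e_n(\epsilon)=e_n(\rho^{(n)}(\epsilon))$. *)

(* Defs.v *)
From HB Require Import structures.
From mathcomp Require Import all_boot all_order all_algebra.
From mathcomp Require Import complex.
From mathcomp Require Import reals trigo.
Set Implicit Arguments. Unset Strict Implicit. Unset Printing Implicit Defensive.
Import Order.TTheory GRing.Theory Num.Theory.
Local Open Scope ring_scope.

Section Photonics.
Variable R : realType.
Local Notation C := (complex R).

Definition rC (x : R) : C := Complex x 0.
Definition normsq (z : C) : R := complex.Re z ^+ 2 + complex.Im z ^+ 2.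

Definition omega (m : nat) : C :=
  Complex (cos (2 * pi / m%:R)) (sin (2 * pi / m%:R)).

Definition fourier_entry (m i j : nat) : C :=
  omega m ^+ (i * j) / rC (Num.sqrt m%:R).

Definition fourier (m : nat) : 'M[C]_m :=
  \matrix_(i < m, j < m) fourier_entry m i j.

(* mixed-radix digits: mode a = m_1 + n_1 m_2 + n_1 n_2 m_3 + ... ;
   digit ns k a = m_{k+1} (0-based k) *)
Definition radix_prefix (ns : seq nat) (k : nat) : nat :=
  \prod_(j < k) nth 0%N ns j.
Definition digit (ns : seq nat) (k a : nat) : nat :=
  ((a %/ radix_prefix ns k) %% nth 0%N ns k)%N.

(* F_{(n_1,...,n_l)} = F_{n_1} (x) ... (x) F_{n_l}, with the mode labelling
   of the paper: the entry between |m_1..m_l> and |m'_1..m'_l> is the product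
   of the entries of the factors. *)
Definition fourier_tensor (ns : seq nat) : 'M[C]_(\prod_(m <- ns) m) :=
  \matrix_(a, b) \prod_(k < size ns)
     fourier_entry (nth 0%N ns k) (digit ns k a) (digit ns k b).

(* n modes, internal labels 'I_L (label 0 is xi_0).
   lab j = internal state of the input photon in mode j.
   A "path" sg : {ffun 'I_n -> 'I_n} sends input photon j to output mode sg j;
   expanding prod_j (sum_i U_ij a_i^dag[xi_{lab j}]) |0> gives
   sum_sg (prod_j U_{sg j, j}) prod_j a^dag_{sg j}[xi_{lab j}] |0>. *)
Definition config n L (lab : {ffun 'I_n -> 'I_L}) (sg : {ffun 'I_n -> 'I_n})
  : {ffun 'I_n * 'I_L -> nat} :=
  [ffun p => #|[set j | (sg j == p.1) && (lab j == p.2)]|].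

(* occupation configuration: occ (i, x) photons in mode i with internal state x *)
Definition occ_nat n L (occ : {ffun 'I_n * 'I_L -> 'I_n.+1})
  : {ffun 'I_n * 'I_L -> nat} := [ffun p => nat_of_ord (occ p)].

(* coefficient of prod a^dag |0> (unnormalized) in U^ (input state) *)
Definition amp n L (U : 'M[C]_n) (lab : {ffun 'I_n -> 'I_L})
  (occ : {ffun 'I_n * 'I_L -> 'I_n.+1}) : C :=
  \sum_(sg : {ffun 'I_n -> 'I_n} | config lab sg == occ_nat occ)
     \prod_(j < n) U (sg j) j.

(* probability of the projective outcome onto the normalized state
   prod a^dag |0> / sqrt(prod occ!) :  |amp|^2 * prod occ! *)
Definition outcome_prob n L (U : 'M[C]_n) (lab : {ffun 'I_n -> 'I_L})
  (occ : {ffun 'I_n * 'I_L -> 'I_n.+1}) : R :=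
  normsq (amp U lab occ) * (\prod_(p : 'I_n * 'I_L) (nat_of_ord (occ p))`!)%:R.

(* <s_0,...,s_{n-1}| U^ |1,...,1>  (no internal degrees of freedom) *)
Definition fock_amp n (U : 'M[C]_n) (s : 'I_n -> nat) : C :=
  (\sum_(sg : {ffun 'I_n -> 'I_n} | [forall i, #|[set j | sg j == i]| == s i])
     \prod_(j < n) U (sg j) j)
  * rC (Num.sqrt (\prod_(i < n) (s i)`!)%:R).

Definition ideal_pattern n (U : 'M[C]_n) (s : 'I_n -> nat) : bool :=
  [&& (\sum_(i < n) s i == n)%N,
      [forall i : 'I_n, (nat_of_ord i == 0)%N ==> (s i == 1)%N]
    & fock_amp U s != 0].

Definition mode_count n L (occ : {ffun 'I_n * 'I_L -> 'I_n.+1}) (i : 'I_n) : nat :=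
  (\sum_(x < L) nat_of_ord (occ (i, x)))%N.

(* PNRD on modes 1..n-1, and s_0 := n - sum_{j>=1} s_j *)
Definition heralded_pattern n L (occ : {ffun 'I_n * 'I_L -> 'I_n.+1}) : 'I_n -> nat :=
  fun i => if (nat_of_ord i == 0)%N
           then (n - \sum_(j < n | nat_of_ord j != 0%N) mode_count occ j)%N
           else mode_count occ i.

Definition success n L (U : 'M[C]_n) (occ : {ffun 'I_n * 'I_L -> 'I_n.+1}) : bool :=
  ideal_pattern U (heralded_pattern occ).

Definition mode0_error n L (occ : {ffun 'I_n * 'I_L -> 'I_n.+1}) : bool :=
  [exists p : 'I_n * 'I_L,
     [&& nat_of_ord p.1 == 0%N, nat_of_ord p.2 != 0%N & (0 < occ p)%N]].

(* input: photon in mode i independently has internal state x with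
   probability pl i x *)
Definition input_weight n L (pl : 'I_n -> 'I_L -> R) (lab : {ffun 'I_n -> 'I_L}) : R :=
  \prod_(i < n) pl i (lab i).

Definition heralding_rate n L (U : 'M[C]_n) (pl : 'I_n -> 'I_L -> R) : R :=
  \sum_(lab : {ffun 'I_n -> 'I_L}) input_weight pl lab *
    \sum_(occ : {ffun 'I_n * 'I_L -> 'I_n.+1} | success U occ) outcome_prob U lab occ.

Definition success_and_error n L (U : 'M[C]_n) (pl : 'I_n -> 'I_L -> R) : R :=
  \sum_(lab : {ffun 'I_n -> 'I_L}) input_weight pl lab *
    \sum_(occ : {ffun 'I_n * 'I_L -> 'I_n.+1} | success U occ && mode0_error occ)
       outcome_prob U lab occ.

Definition error_rate n L (U : 'M[C]_n) (pl : 'I_n -> 'I_L -> R) : R :=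
  success_and_error U pl / heralding_rate U pl.

Definition urs_dist n (Rp : nat) (eps : R) : 'I_n -> 'I_Rp.+1 -> R :=
  fun _ x => if (nat_of_ord x == 0)%N then 1 - eps else eps / Rp%:R.

Definition obb_dist n (eps : R) : 'I_n -> 'I_n.+1 -> R :=
  fun i x => if (nat_of_ord x == 0)%N then 1 - eps
             else if (nat_of_ord x == (nat_of_ord i).+1)%N then eps else 0.

End Photonics.
Arguments urs_dist {R n} Rp eps _ _.
Arguments obb_dist {R n} eps _ _.

(* Main.v *)
Require Import Defs.
From HB Require Import structures.
From mathcomp Require Import all_boot all_order all_algebra.
From mathcomp Require Import complex.
From mathcomp Require Import reals trigo.
From mathcomp Require Import ring lra zify.
From mathcomp Require Import fingroup perm.
From Stdlib Require Import FunctionalExtensionality.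
Set Implicit Arguments. Unset Strict Implicit. Unset Printing Implicit Defensive.
Import Order.TTheory GRing.Theory Num.Theory.
Local Open Scope complex_scope.
Local Open Scope ring_scope.

Section Fourier.
Variable R : realType.
Local Notation C := (complex R).

Lemma rCE (x : R) : rC x = x%:C. Proof. by []. Qed.

Lemma normsqE (z : C) : (normsq z)%:C = `|z| ^+ 2.
Proof. exact: add_Re2_Im2. Qed.

Lemma normsqM (x y : C) : normsq (x * y) = normsq x * normsq y.
Proof. by apply: complexI; rewrite rmorphM /= !normsqE normrM exprMn. Qed.

Lemma normsq_ge0 (z : C) : 0 <= normsq z.
Proof. by rewrite /normsq addr_ge0 // sqr_ge0. Qed.

Lemma normsq_eq0 (z : C) : (normsq z == 0) = (z == 0).
Proof.
apply/idP/idP => [/eqP h|/eqP ->]; last by rewrite /normsq /= expr0n /= addr0.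
have : `|z| ^+ 2 = 0 by rewrite -normsqE h.
by move/eqP; rewrite expf_eq0 /= normr_eq0 => /eqP ->.
Qed.

Lemma normsq_nat (k : nat) (z : C) : normsq (k%:R * z) = (k%:R) ^+ 2 * normsq z.
Proof.
rewrite normsqM; congr (_ * _).
by rewrite -(rmorph_nat (real_complex R)) /normsq /= expr0n /= addr0.
Qed.


Lemma mulcE (a b c d : R) : (Complex a b) * (Complex c d) = Complex (a * c - b * d) (a * d + b * c).
Proof. by []. Qed.

Lemma omegaX m k : omega R m ^+ k =
  Complex (cos (k%:R * (2 * pi / m%:R))) (sin (k%:R * (2 * pi / m%:R))).
Proof.
elim: k => [|k IH]; first by rewrite expr0 mul0r cos0 sin0.
rewrite exprSr IH /omega mulcE; set x := 2 * pi / m%:R.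
rewrite -[k.+1%:R]natr1 mulrDl mul1r cosD sinD.
by rewrite [X in _ +i* X = _]addrC.
Qed.

Lemma omega_m m : (0 < m)%N -> omega R m ^+ m = 1.
Proof.
move=> m0; rewrite omegaX mulrCA divff ?pnatr_eq0 -?lt0n // mulr1.
by rewrite mulr_natl cos2pi sin2pi.
Qed.

Lemma omegaXmod m k : (0 < m)%N -> omega R m ^+ k = omega R m ^+ (k %% m).
Proof.
move=> m0; rewrite {1}(divn_eq k m) exprD mulnC exprM.
by rewrite (omega_m m0) expr1n mul1r.
Qed.

Lemma omega_neq1 m r : (0 < r < m)%N -> omega R m ^+ r != 1.
Proof.
case/andP => r0 rm; have m0 : (0 < m)%N by apply: leq_trans rm.
rewrite omegaX; apply/eqP => -[hc hs].
set t := r%:R * (2 * pi / m%:R) in hc hs.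
have t0 : 0 < t by rewrite mulr_gt0 ?ltr0n // divr_gt0 ?ltr0n // mulr_gt0 // pi_gt0.
have t2 : t < pi *+ 2.
  have -> : t = (r%:R / m%:R) * (pi *+ 2).
    by rewrite /t -mulr_natl; field; rewrite pnatr_eq0 -lt0n.
  have p2 : 0 < (pi : R) *+ 2 by rewrite -mulr_natl mulr_gt0 ?ltr0n ?pi_gt0.
  rewrite mulrC -[X in _ < X]mulr1 ltr_pM2l // ltr_pdivrMr ?ltr0n // mul1r ltr_nat //.
have [tpi|tpi|tpi] := ltrgtP t pi.
- have : 0 < t < pi by rewrite t0 tpi.
  by move/sin_gt0_pi; rewrite hs ltxx.
- have h1 : 0 < t - pi < pi by rewrite subr_gt0 tpi /= ltrBlDr -mulr2n.
  have h2 := sin_gt0_pi h1; have := sinDpi (t - pi).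
  rewrite subrK hs => /eqP; rewrite eq_sym oppr_eq0 => /eqP h3.
  by rewrite h3 ltxx in h2.
- by rewrite tpi cospi in hc; lra.
Qed.

Lemma charsum m r : (0 < r < m)%N -> \sum_(t < m) omega R m ^+ (t * r) = 0.
Proof.
move=> hr; have m0 : (0 < m)%N by case/andP: hr => ? /(leq_trans _) ->.
have := subrX1 (omega R m ^+ r) m.
rewrite -exprM mulnC exprM omega_m // expr1n subrr => /esym/eqP.
rewrite mulf_eq0 subr_eq0 (negbTE (omega_neq1 hr)) /= => /eqP h.
by rewrite -[RHS]h; apply: eq_bigr => t _; rewrite mulnC exprM.
Qed.

End Fourier.

Section T.
Variable R : realType.
Local Notation C := (complex R).
Local Notation fe := (fourier_entry R).

Lemma fe_0j m j : fe m 0 j = (rC (Num.sqrt (m%:R : R)))^-1.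
Proof. by rewrite /fourier_entry mul0n expr0 div1r. Qed.

Lemma fe_i0 m i : fe m i 0 = (rC (Num.sqrt (m%:R : R)))^-1.
Proof. by rewrite /fourier_entry muln0 expr0 div1r. Qed.

Lemma fe_shift m a j g : (0 < m)%N ->
  fe m a ((j + g) %% m) = fe m a j * omega R m ^+ (a * g).
Proof.
move=> m0; rewrite /fourier_entry omegaXmod // modnMmr -omegaXmod // mulnDr exprD.
by rewrite mulrAC.
Qed.

Lemma rowsum_fe m r : (0 < m)%N -> (r < m)%N ->
  \sum_(t < m) fe m t r = if r == 0%N then m%:R / rC (Num.sqrt (m%:R : R)) else 0.
Proof.
move=> m0 rm; rewrite /fourier_entry -mulr_suml.
case: eqP => [->|/eqP r0].
  by congr (_ * _); under eq_bigr do rewrite muln0 expr0; rewrite sumr_const card_ord.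
by rewrite charsum ?mul0r // lt0n r0.
Qed.

Definition T (ns : seq nat) (a b : nat) : C :=
  \prod_(k < size ns) fe (nth 0%N ns k) (digit ns k a) (digit ns k b).

Definition prodn (ns : seq nat) := (\prod_(m <- ns) m)%N.

Lemma prodn_cons m ns : prodn (m :: ns) = (m * prodn ns)%N.
Proof. by rewrite /prodn big_cons. Qed.

Lemma T_nil a b : T [::] a b = 1.
Proof. by rewrite /T big_ord0. Qed.

Lemma digit0 m ns a : digit (m :: ns) 0 a = (a %% m)%N.
Proof. by rewrite /digit /radix_prefix big_ord0 divn1. Qed.

Lemma digitS m ns k a : digit (m :: ns) k.+1 a = digit ns k (a %/ m).
Proof. by rewrite /digit /radix_prefix big_ord_recl /= divnMA. Qed.

Lemma T_cons m ns a b :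
  T (m :: ns) a b = fe m (a %% m) (b %% m) * T ns (a %/ m) (b %/ m).
Proof.
rewrite /T big_ord_recl /= !digit0; congr (_ * _).
by apply: eq_bigr => k _; rewrite /bump /= !digitS.
Qed.

Definition c0 (ns : seq nat) : C := \prod_(m <- ns) (rC (Num.sqrt (m%:R : R)))^-1.

Lemma T_0j ns b : T ns 0 b = c0 ns.
Proof.
elim: ns b => [|m ns IH] b; first by rewrite T_nil /c0 big_nil.
by rewrite T_cons mod0n div0n fe_0j IH /c0 big_cons.
Qed.

Lemma T_i0 ns a : T ns a 0 = c0 ns.
Proof.
elim: ns a => [|m ns IH] a; first by rewrite T_nil /c0 big_nil.
by rewrite T_cons mod0n div0n fe_i0 IH /c0 big_cons.
Qed.

Lemma rC_sqrt_neq0 m : (0 < m)%N -> rC (Num.sqrt (m%:R : R)) != 0.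
Proof.
move=> m0; rewrite rCE (fmorph_eq0 (real_complex R)) sqrtr_eq0 -ltNge ltr0n //.
Qed.

Lemma c0_neq0 ns : all (fun m => 0 < m)%N ns -> c0 ns != 0.
Proof.
elim: ns => [|m ns IH] /=; first by rewrite /c0 big_nil oner_eq0.
case/andP=> m0 /IH h; rewrite /c0 big_cons mulf_neq0 // invr_eq0 rC_sqrt_neq0 //.
Qed.

Lemma sum_split (F : nat -> C) m n :
  \sum_(a < m * n) F a = \sum_(u < n) \sum_(t < m) F (t + m * u)%N.
Proof.
elim: n => [|n IH]; first by rewrite muln0 !big_ord0.
rewrite mulnSr big_split_ord /= IH big_ord_recr /=; congr (_ + _).
by apply: eq_bigr => t _; rewrite addnC.
Qed.

Lemma rowsumT ns j : all (fun m => 0 < m)%N ns -> (j < prodn ns)%N ->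
  \sum_(a < prodn ns) T ns a j = if j == 0%N then (prodn ns)%:R * c0 ns else 0.
Proof.
elim: ns j => [|m ns IH] j /=.
  rewrite /prodn big_nil => _; rewrite ltnS leqn0 => /eqP ->.
  by rewrite big_ord1 T_nil /c0 big_nil mulr1.
case/andP=> m0 hall; rewrite prodn_cons => hj.
have hj' : (j %/ m < prodn ns)%N by rewrite ltn_divLR // mulnC.
rewrite (sum_split (fun a => T (m :: ns) a j)).
have e : forall (u : 'I_(prodn ns)) (t : 'I_m), T (m :: ns) (t + m * u)%N j = fe m t (j %% m) * T ns u (j %/ m).
  move=> u t; rewrite T_cons addnC mulnC modnMDl divnMDl // modn_small //.
  by rewrite divn_small // addn0.
under eq_bigr do under eq_bigr do rewrite e.
under eq_bigr do rewrite -mulr_suml.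
rewrite -mulr_sumr rowsum_fe ?ltn_pmod // IH //.
have -> : (j == 0%N) = (j %% m == 0)%N && (j %/ m == 0)%N.
  apply/eqP/andP => [->|[/eqP h1 /eqP h2]]; first by rewrite mod0n div0n.
  by rewrite (divn_eq j m) h1 h2.
case: (j %% m == 0)%N; case: (j %/ m == 0)%N; rewrite ?mul0r ?mulr0 //.
by rewrite /c0 big_cons natrM; ring.
Qed.

Fixpoint sh (ns : seq nat) (g j : nat) : nat :=
  match ns with
  | [::] => 0%N
  | m :: ns' => ((j %% m + g %% m) %% m + m * sh ns' (g %/ m) (j %/ m))%N
  end.

Fixpoint chi (ns : seq nat) (g a : nat) : C :=
  match ns with
  | [::] => 1
  | m :: ns' => omega R m ^+ ((a %% m) * (g %% m)) * chi ns' (g %/ m) (a %/ m)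
  end.

Lemma sh_lt ns g j : all (fun m => 0 < m)%N ns -> (sh ns g j < prodn ns)%N.
Proof.
elim: ns g j => [|m ns IH] g j /=; first by rewrite /prodn big_nil.
case/andP=> m0 hall; rewrite prodn_cons.
have h1 := IH (g %/ m)%N (j %/ m)%N hall.
have h2 : ((j %% m + g %% m) %% m < m)%N by rewrite ltn_pmod.
apply: (@leq_trans (m * (sh ns (g %/ m) (j %/ m)).+1)%N); last by rewrite leq_mul2l h1 orbT.
by rewrite mulnS ltn_add2r.
Qed.

Lemma sh_mod m ns g j : (0 < m)%N ->
  (sh (m :: ns) g j %% m = (j %% m + g %% m) %% m)%N /\
  (sh (m :: ns) g j %/ m = sh ns (g %/ m) (j %/ m))%N.
Proof.
move=> m0; have hx : ((j %% m + g %% m) %% m < m)%N := ltn_pmod _ m0.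
rewrite /= [(_ + m * _)%N]addnC [(m * _)%N]mulnC; split.
  by rewrite modnMDl modn_small.
by rewrite divnMDl // (divn_small hx) addn0.
Qed.

Lemma sh_inj ns g j j' : all (fun m => 0 < m)%N ns ->
  (j < prodn ns)%N -> (j' < prodn ns)%N -> sh ns g j = sh ns g j' -> j = j'.
Proof.
elim: ns g j j' => [|m ns IH] g j j' /=.
  by rewrite /prodn big_nil !ltnS !leqn0 => _ /eqP -> /eqP ->.
case/andP=> m0 hall; rewrite prodn_cons => hj hj' e0.
have e : sh (m :: ns) g j = sh (m :: ns) g j' := e0.
have [e1 e2] := sh_mod ns g j m0; have [e1' e2'] := sh_mod ns g j' m0.
have hm : (j %% m = j' %% m)%N.
  have : (j %% m + g %% m == j' %% m + g %% m %[mod m])%N by rewrite -e1 -e1' e.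
  by rewrite eqn_modDr !modn_mod => /eqP.
have hd : (j %/ m = j' %/ m)%N.
  apply: (IH (g %/ m)%N) => //; try by rewrite ltn_divLR // mulnC.
  by rewrite -e2 -e2' e.
by rewrite (divn_eq j m) (divn_eq j' m) hm hd.
Qed.

Lemma sh_0 ns g : all (fun m => 0 < m)%N ns -> (g < prodn ns)%N -> sh ns g 0 = g.
Proof.
elim: ns g => [|m ns IH] g /=.
  by rewrite /prodn big_nil ltnS leqn0 => _ /eqP ->.
case/andP=> m0 hall; rewrite prodn_cons => hg.
rewrite mod0n add0n modn_mod div0n IH; last by rewrite ltn_divLR // mulnC.
  by rewrite addnC mulnC -divn_eq.
by [].
Qed.

Lemma T_sh ns g a j : all (fun m => 0 < m)%N ns ->
  T ns a (sh ns g j) = T ns a j * chi ns g a.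
Proof.
elim: ns g a j => [|m ns IH] g a j /=; first by rewrite !T_nil mulr1.
case/andP=> m0 hall; have [e1 e2] := sh_mod ns g j m0.
rewrite T_cons e1 e2 IH // fe_shift // T_cons.
by rewrite mulrACA.
Qed.

End T.

Section Gen.
Variable R : realType.
Local Notation C := (complex R).
Variables (n l : nat) (U : 'M[C]_n) (z0 : 'I_n).
Hypothesis hz0 : nat_of_ord z0 = 0%N.

Local Notation sgT := {ffun 'I_n -> 'I_n}.
Local Notation occT := {ffun 'I_n * 'I_l.+1 -> 'I_n.+1}.
Local Notation labT := {ffun 'I_n -> 'I_l.+1}.
Local Notation S := {ffun 'I_n -> 'I_n.+1}.

Definition Fsg (sg : sgT) : C := \prod_(j < n) U (sg j) j.
Definition cntn (sg : sgT) (i : 'I_n) : nat := #|[set j | sg j == i]|.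
Definition Pn (s : 'I_n -> nat) : C :=
  \sum_(sg : sgT | [forall i, cntn sg i == s i]) Fsg sg.
Definition Qn (i : 'I_n) (s : 'I_n -> nat) : C :=
  \sum_(sg : sgT | [forall a, cntn sg a == s a] && (sg i == z0)) Fsg sg.
Definition sv (s : S) : 'I_n -> nat := fun i => nat_of_ord (s i).
Definition cfac (s : 'I_n -> nat) : nat := (\prod_(a < n) (s a)`!)%N.

Lemma ffun_app (T : finType) (V : Type) (f g : {ffun T -> V}) x : f = g -> f x = g x.
Proof. by move->. Qed.

Lemma ideal_ext f g : f =1 g -> ideal_pattern U f = ideal_pattern U g.
Proof. by move=> h; rewrite (functional_extensionality _ _ h). Qed.

Lemma neq_z0 (j : 'I_n) : (nat_of_ord j != 0%N) = (j != z0).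
Proof. by rewrite -hz0; congr negb; apply/eqP/eqP => [/val_inj|->]. Qed.

Lemma eq_z0 (j : 'I_n) : (nat_of_ord j == 0%N) = (j == z0).
Proof. by apply/negb_inj; rewrite neq_z0. Qed.

Lemma n_gt0 : (0 < n)%N.
Proof. by case: n z0 => [[]|]. Qed.

Lemma val_inord k : (k <= n)%N -> nat_of_ord (inord k : 'I_n.+1) = k.
Proof. by move=> h; rewrite inordK. Qed.

Lemma card_sel (P : pred 'I_n) : #|[set j | P j]| = (\sum_(j < n) P j)%N.
Proof. by rewrite -sum1dep_card big_mkcond. Qed.

Lemma sum_cnt (sg : sgT) : (\sum_(a < n) cntn sg a)%N = n.
Proof.
rewrite /cntn; under eq_bigr do rewrite card_sel.
rewrite exchange_big /=; rewrite -[RHS]card_ord -sum1_card.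
apply: eq_bigr => j _; rewrite (bigD1 (sg j)) //= eqxx big1 ?addn0 //.
by move=> a /negbTE; rewrite eq_sym => ->.
Qed.

Lemma amp_witness (lab : labT) (occ : occT) : amp U lab occ != 0 ->
  exists sg, config lab sg = occ_nat occ.
Proof.
move=> h; case: (boolP [exists sg, config lab sg == occ_nat occ]).
  by case/existsP => sg /eqP; exists sg.
move=> hn; move: h; rewrite /amp big_pred0 ?eqxx // => sg.
by apply/negbTE; apply: contra hn => h; apply/existsP; exists sg.
Qed.

Lemma mc_config (lab : labT) (sg : sgT) (occ : occT) : config lab sg = occ_nat occ ->
  forall a, mode_count occ a = cntn sg a.
Proof.
move=> e a; rewrite /mode_count.
have -> : (\sum_(x < l.+1) occ (a, x) = \sum_(x < l.+1) occ_nat occ (a, x))%N.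
  by apply: eq_bigr => x _; rewrite ffunE.
rewrite -e /cntn; under eq_bigr do rewrite ffunE /= card_sel.
rewrite exchange_big card_sel /=; apply: eq_bigr => j _.
case: (sg j == a) => /=; last by rewrite big1.
by rewrite (bigD1 (lab j)) //= eqxx big1 ?addn0 // => x /negbTE; rewrite eq_sym => ->.
Qed.

Lemma her_eq (occ : occT) (s : 'I_n -> nat) : (forall a, mode_count occ a = s a) ->
  (\sum_(a < n) s a)%N = n -> heralded_pattern occ =1 s.
Proof.
move=> hm hs i; rewrite /heralded_pattern eq_z0.
case: eqP => [->|_]; last by rewrite hm.
under eq_bigl do rewrite neq_z0.
under eq_bigr do rewrite hm.
by rewrite -{1}hs (bigD1 z0) //= addnK.
Qed.

Lemma success_eq (occ : occT) (s : 'I_n -> nat) : (forall a, mode_count occ a = s a) ->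
  (\sum_(a < n) s a)%N = n -> success U occ = ideal_pattern U s.
Proof. by move=> hm hs; apply: ideal_ext; apply: her_eq. Qed.

Lemma Pn_witness s : Pn s != 0 -> exists sg, forall a, cntn sg a = s a.
Proof.
move=> h; case: (boolP [exists sg, [forall a, cntn sg a == s a]]).
  by case/existsP => sg /forallP hs; exists sg => a; apply/eqP.
move=> hn; move: h; rewrite /Pn big_pred0 ?eqxx // => sg.
by apply/negbTE; apply: contra hn => h; apply/existsP; exists sg.
Qed.

Lemma Qn_witness i s : Qn i s != 0 -> exists sg, (forall a, cntn sg a = s a) /\ sg i = z0.
Proof.
move=> h; case: (boolP [exists sg, [forall a, cntn sg a == s a] && (sg i == z0)]).
  by case/existsP => sg /andP [/forallP hs /eqP hi]; exists sg; split => // a; apply/eqP.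
move=> hn; move: h; rewrite /Qn big_pred0 ?eqxx // => sg.
by apply/negbTE; apply: contra hn => h; apply/existsP; exists sg.
Qed.

Lemma sum_s_of_witness (s : 'I_n -> nat) (sg : sgT) : (forall a, cntn sg a = s a) ->
  (\sum_(a < n) s a)%N = n.
Proof. by move=> h; rewrite -[RHS](sum_cnt sg); apply: eq_bigr => a _; rewrite h. Qed.

Definition lab0 : labT := [ffun _ => ord0].
Definition e0 (s : S) : occT := [ffun p => if p.2 == ord0 then s p.1 else ord0].
Definition proj0 (occ : occT) : S := [ffun a => occ (a, ord0)].

Lemma proj0K (s : S) : proj0 (e0 s) = s.
Proof. by apply/ffunP => a; rewrite !ffunE /= ?eqxx. Qed.

Lemma config_lab0 (sg : sgT) (p : 'I_n * 'I_l.+1) :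
  config lab0 sg p = if p.2 == ord0 then cntn sg p.1 else 0%N.
Proof.
rewrite ffunE /cntn; case: p => a y /=; case: eqP => [->|/eqP hy].
  by apply: eq_card => j; rewrite !inE ffunE eqxx andbT.
apply/eqP; rewrite cards_eq0; apply/eqP/setP => j; rewrite !inE ffunE.
by rewrite [ord0 == y]eq_sym (negbTE hy) andbF.
Qed.

Lemma amp_lab0_out (occ : occT) : e0 (proj0 occ) != occ -> amp U lab0 occ = 0.
Proof.
move=> hn; apply/eqP; apply: contraR hn => /amp_witness [sg e].
apply/eqP/ffunP => -[a y]; rewrite !ffunE /=; case: eqP => [->//|/eqP hy].
apply: ord_inj => /=.
have := ffun_app (a, y) e; rewrite config_lab0 /= (negbTE hy) ffunE.
by move=> <-.
Qed.

Lemma amp_lab0_e0 (s : S) : amp U lab0 (e0 s) = Pn (sv s).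
Proof.
rewrite /amp /Pn; apply: eq_bigl => sg.
apply/eqP/forallP => [e i|h].
  apply/eqP; have := ffun_app (i, ord0) e.
  by rewrite config_lab0 /= ?eqxx !ffunE /= ?eqxx => ->.
apply/ffunP => -[a y]; rewrite config_lab0 !ffunE /=.
by case: (y == ord0) => //; apply/eqP; apply: h.
Qed.

Lemma prod_pair (F : 'I_n * 'I_l.+1 -> nat) :
  (\prod_(p : 'I_n * 'I_l.+1) F p = \prod_(a < n) \prod_(y < l.+1) F (a, y))%N.
Proof. by rewrite pair_bigA; apply: eq_bigr => -[]. Qed.

Lemma cfac_e0 (s : S) : (\prod_(p : 'I_n * 'I_l.+1) (nat_of_ord (e0 s p))`!)%N = cfac (sv s).
Proof.
rewrite prod_pair; apply: eq_bigr => a _.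
rewrite big_ord_recl ffunE /= ?eqxx big1 ?muln1 // => y _.
by rewrite ffunE /=.
Qed.

Lemma mc_e0 (s : S) a : mode_count (e0 s) a = sv s a.
Proof.
rewrite /mode_count big_ord_recl ffunE /= ?eqxx big1 ?addn0 // => y _.
by rewrite ffunE.
Qed.

Lemma G0 : \sum_(occ : occT | success U occ) outcome_prob U lab0 occ =
  \sum_(s : S | ideal_pattern U (sv s)) normsq (Pn (sv s)) * (cfac (sv s))%:R.
Proof.
rewrite big_mkcond /=.
rewrite (bigID (fun occ => e0 (proj0 occ) == occ)) /= [X in _ + X]big1 ?addr0; last first.
  move=> occ hn; rewrite /outcome_prob amp_lab0_out //.
  by case: (success U occ) => //; rewrite /normsq /= expr0n /= addr0 mul0r.
rewrite (reindex_onto e0 proj0); last by move=> occ /eqP.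
rewrite big_mkcond [RHS]big_mkcond; apply: eq_bigr => s _.
rewrite proj0K !eqxx /= /outcome_prob amp_lab0_e0 cfac_e0.
case: (eqVneq (Pn (sv s)) 0) => [->|hP].
  by rewrite /normsq /= expr0n /= addr0 !mul0r; case: ifP; case: ifP.
have [sg hsg] := Pn_witness hP.
by rewrite (success_eq (mc_e0 s) (sum_s_of_witness hsg)).
Qed.


Lemma normsq0 : normsq (0 : C) = 0.
Proof. by rewrite /normsq /= expr0n /= addr0. Qed.

Lemma ideal_z0 (f : 'I_n -> nat) : ideal_pattern U f -> f z0 = 1%N.
Proof.
case/and3P => _ /forallP /(_ z0) h _; move: h; rewrite eq_z0 eqxx /=.
by move/eqP.
Qed.

Lemma Ga0 : \sum_(occ : occT | success U occ && mode0_error occ) outcome_prob U lab0 occ = 0.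
Proof.
apply: big1 => occ /andP [_ /existsP [[a y] /and3P [_ hy hp]]].
case: (eqVneq (amp U lab0 occ) 0) => [h|/amp_witness [sg e]].
  by rewrite /outcome_prob h normsq0 mul0r.
have := ffun_app (a, y) e; rewrite config_lab0 ffunE /=.
have -> : (y == ord0) = false by apply/negbTE; apply: contra hy => /eqP ->.
by move=> h; rewrite -h ltnn in hp.
Qed.

Variables (i : 'I_n) (x : 'I_l.+1).
Hypothesis hx : x != ord0.

Definition labx : labT := [ffun j => if j == i then x else ord0].

Lemma cnt_minus (sg : sgT) a :
  #|[set j | (sg j == a) && (j != i)]| = (cntn sg a - (sg i == a))%N.
Proof.
rewrite /cntn [in RHS](cardD1 i) inE addKn; apply: eq_card => j; rewrite !inE.
by rewrite andbC.
Qed.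

Lemma config_labx (sg : sgT) a y : config labx sg (a, y) =
  if y == ord0 then #|[set j | (sg j == a) && (j != i)]|
  else ((sg i == a) && (y == x) : nat).
Proof.
rewrite ffunE /=; case: eqP => [->|/eqP hy].
  apply: eq_card => j; rewrite !inE ffunE; case: (eqVneq j i) => [->|hji].
    by rewrite (negbTE hx) !andbF.
  by rewrite eqxx andbT.
case h: ((sg i == a) && (y == x)).
  case/andP: h => /eqP <- /eqP ->.
  rewrite (eq_card (B := pred1 i)) ?card1 // => j; rewrite !inE ffunE.
  case: (eqVneq j i) => [->|hji]; first by rewrite !eqxx.
  by rewrite [ord0 == x]eq_sym (negbTE hx) andbF.
apply/eqP; rewrite cards_eq0; apply/eqP/setP => j; rewrite !inE ffunE.
case: (eqVneq j i) => [->|hji]; last by rewrite [ord0 == y]eq_sym (negbTE hy) andbF.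
by rewrite [x == y]eq_sym h.
Qed.

Definition e1 (s : S) : occT := [ffun p =>
  if p.2 == ord0 then (if p.1 == z0 then inord (s z0).-1 else s p.1)
  else if (p.1 == z0) && (p.2 == x) then inord 1 else ord0].

Definition proj1 (occ : occT) : S :=
  [ffun a => if a == z0 then inord (occ (z0, ord0)).+1 else occ (a, ord0)].

Lemma e1_val (s : S) a y : nat_of_ord (e1 s (a, y)) =
  if y == ord0 then (if a == z0 then (s z0).-1 else s a)
  else ((a == z0) && (y == x) : nat).
Proof.
rewrite ffunE /=; case: (y == ord0); case: (a == z0) => //=.
- by rewrite val_inord // (leq_trans (leq_pred _)) // -ltnS.
- by case: (y == x) => //=; rewrite val_inord // n_gt0.
Qed.

Lemma sum_eqx : (\sum_(y < l.+1 | y != ord0) (y == x : nat))%N = 1%N.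
Proof.
by rewrite (bigD1 x) //= eqxx big1 ?addn0 // => y /andP [_ /negbTE ->].
Qed.

Lemma mc_e1 (s : S) a : (0 < s z0)%N -> mode_count (e1 s) a = s a.
Proof.
move=> hs; rewrite /mode_count (bigD1 ord0) //= e1_val eqxx.
under eq_bigr => y hy do rewrite e1_val (negbTE hy).
case: eqP => [->|_] /=; last by rewrite big1 ?addn0.
by rewrite sum_eqx addn1 prednK.
Qed.

Lemma proj1_e1 (s : S) : (0 < s z0)%N -> proj1 (e1 s) = s.
Proof.
move=> hs; apply/ffunP => a; apply: ord_inj; rewrite ffunE.
case: eqP => [->|/eqP ha]; last by rewrite e1_val eqxx (negbTE ha).
rewrite e1_val !eqxx val_inord prednK //.
by rewrite -ltnS.
Qed.

Lemma proj1_e1_0 (s : S) : nat_of_ord (s z0) = 0%N -> proj1 (e1 s) != s.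
Proof.
move=> hs; apply/eqP => /(ffun_app z0); rewrite ffunE eqxx => /(congr1 (@nat_of_ord _)).
rewrite hs val_inord; last by rewrite e1_val !eqxx hs /= n_gt0.
by rewrite e1_val !eqxx hs.
Qed.

Lemma err_e1 (s : S) : mode0_error (e1 s).
Proof.
apply/existsP; exists (z0, x); rewrite /= hz0 eqxx /=.
have -> : (nat_of_ord x != 0%N) = true.
  by apply: contra hx => /eqP h; apply/eqP/val_inj.
by rewrite e1_val (negbTE hx) !eqxx.
Qed.

Lemma cfac_e1 (s : S) : nat_of_ord (s z0) = 1%N ->
  (\prod_(p : 'I_n * 'I_l.+1) (nat_of_ord (e1 s p))`!)%N = cfac (sv s).
Proof.
move=> hs; rewrite prod_pair; apply: eq_bigr => a _.
rewrite (bigD1 ord0) //= big1 ?muln1; last first.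
  move=> y hy; rewrite e1_val (negbTE hy).
  by case: ((a == z0) && (y == x)).
rewrite e1_val eqxx /sv; case: eqP => [->|//].
by rewrite hs.
Qed.

Lemma amp_labx_e1 (s : S) : (0 < s z0)%N -> amp U labx (e1 s) = Qn i (sv s).
Proof.
move=> hs; rewrite /amp /Qn; apply: eq_bigl => sg.
apply/eqP/andP => [e|[/forallP hc /eqP hi]].
  have hi : sg i = z0.
    have := ffun_app (z0, x) e; rewrite config_labx ffunE /= e1_val (negbTE hx) !eqxx.
    by case: eqP.
  split; last by rewrite hi.
  apply/forallP => a; apply/eqP.
  by rewrite -(mc_config e) mc_e1.
apply/ffunP => -[a y]; rewrite config_labx ffunE /= e1_val.
case: eqP => _; last by rewrite hi eq_sym.
rewrite cnt_minus hi (eqP (hc a)) [z0 == a]eq_sym.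
by case: eqP => [->|_]; rewrite ?subn1 ?subn0.
Qed.

Lemma out_e1 (occ : occT) : e1 (proj1 occ) != occ ->
  (if success U occ && mode0_error occ then outcome_prob U labx occ else 0) = 0.
Proof.
move=> hn; case: ifP => // /andP [hsucc /existsP [[a y] /and3P [ha hy hp]]].
case: (eqVneq (amp U labx occ) 0) => [h|/amp_witness [sg e]].
  by rewrite /outcome_prob h normsq0 mul0r.
exfalso; move/negP: hn; apply.
have ha' : a = z0 by apply/eqP; rewrite -eq_z0.
have hy' : y != ord0 by apply: contra hy => /eqP ->.
have vocc : forall b w, nat_of_ord (occ (b, w)) = config labx sg (b, w).
  by move=> b w; rewrite e ffunE.
have hi : sg i = z0 /\ y = x.
  move: hp; rewrite vocc config_labx (negbTE hy') ha'.
  by case: eqP => // -> ; case: eqP.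
case: hi => hi hyx.
have hc : cntn sg z0 = 1%N.
  have hm := mc_config e.
  have hs := sum_cnt sg.
  rewrite (success_eq hm hs) in hsucc.
  exact: ideal_z0 hsucc.
have h0 : #|[set j | (sg j == z0) && (j != i)]| = 0%N by rewrite cnt_minus hc hi eqxx.
apply/eqP/ffunP => -[b w]; apply: ord_inj; rewrite e1_val vocc config_labx.
case: eqP => hw; last by rewrite hi eq_sym.
case: (eqVneq b z0) => [->|hb].
  rewrite ffunE eqxx vocc config_labx eqxx h0 val_inord //; exact: n_gt0.
by rewrite ffunE (negbTE hb) vocc config_labx eqxx.
Qed.

Lemma G1 : \sum_(occ : occT | success U occ && mode0_error occ) outcome_prob U labx occ =
  \sum_(s : S | ideal_pattern U (sv s)) normsq (Qn i (sv s)) * (cfac (sv s))%:R.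
Proof.
rewrite big_mkcond /=.
rewrite (bigID (fun occ => e1 (proj1 occ) == occ)) /= [X in _ + X]big1 ?addr0; last first.
  by move=> occ hn; apply: out_e1.
rewrite (reindex_onto e1 proj1); last by move=> occ /eqP.
rewrite big_mkcond [RHS]big_mkcond; apply: eq_bigr => s _.
case: (posnP (s z0)) => [h0|hpos].
  rewrite (negbTE (proj1_e1_0 h0)) andbF.
  case: ifP => // /ideal_z0; rewrite /sv h0 //.
rewrite proj1_e1 // !eqxx err_e1 andbT /outcome_prob amp_labx_e1 //.
case: (eqVneq (Qn i (sv s)) 0) => [->|hQ].
  by rewrite normsq0 !mul0r; case: ifP; case: ifP.
have [sg [hsg _]] := Qn_witness hQ.
have hm : forall a, mode_count (e1 s) a = sv s a by move=> a; rewrite mc_e1.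
rewrite (success_eq hm (sum_s_of_witness hsg)).
rewrite andbT; case: ifP => // hid; rewrite cfac_e1 //.
exact: ideal_z0 hid.
Qed.

End Gen.

Section Sym.
Variable R : realType.
Local Notation C := (complex R).
Variables (n : nat) (U : 'M[C]_n) (z0 : 'I_n).
Hypothesis hz0 : nat_of_ord z0 = 0%N.
Local Notation sgT := {ffun 'I_n -> 'I_n}.
Local Notation S := {ffun 'I_n -> 'I_n.+1}.

Lemma cnt_perm (s : {perm 'I_n}) (sg : sgT) a :
  cntn [ffun j => sg (s j)] a = cntn sg a.
Proof.
rewrite /cntn -[in RHS](card_preimset _ (@perm_inj _ s)); apply: eq_card => j.
by rewrite !inE ffunE.
Qed.

Lemma prod_cnt (chi : 'I_n -> C) (sg : sgT) :
  \prod_(j < n) chi (sg j) = \prod_(a < n) chi a ^+ cntn sg a.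
Proof.
rewrite (partition_big sg xpredT) //=; apply: eq_bigr => a _.
rewrite (eq_bigr (fun _ => chi a)); last by move=> j; rewrite /= => /eqP ->.
by rewrite prodr_const /cntn cardsE.
Qed.

Section OnePerm.
Variables (s : {perm 'I_n}) (chi : 'I_n -> C).
Hypothesis hU : forall a j, U a (s j) = U a j * chi a.

Definition tau (sg : sgT) : sgT := [ffun j => sg ((s^-1)%g j)].
Definition tau' (sg : sgT) : sgT := [ffun j => sg (s j)].

Lemma tauK : cancel tau tau'.
Proof. by move=> sg; apply/ffunP => j; rewrite !ffunE permK. Qed.
Lemma tauK' : cancel tau' tau.
Proof. by move=> sg; apply/ffunP => j; rewrite !ffunE permKV. Qed.

Lemma Fsg_tau sg : Fsg U (tau sg) = Fsg U sg * \prod_(a < n) chi a ^+ cntn sg a.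
Proof.
rewrite /Fsg (reindex_inj (@perm_inj _ s)) /=.
under eq_bigr do rewrite ffunE permK hU.
by rewrite big_split /= prod_cnt.
Qed.

Lemma cnt_tau sg a : cntn (tau sg) a = cntn sg a.
Proof. exact: cnt_perm. Qed.

Lemma Pn_sym (f : 'I_n -> nat) : Pn U f = (\prod_(a < n) chi a ^+ f a) * Pn U f.
Proof.
rewrite {1}/Pn (reindex tau); last by exists tau' => ? _; [apply: tauK | apply: tauK'].
rewrite /Pn mulr_sumr; apply: eq_big => sg.
  by apply: eq_forallb => a; rewrite cnt_tau.
move=> /forallP h; rewrite Fsg_tau mulrC; congr (_ * _).
by apply: eq_bigr => a _; rewrite -(cnt_tau sg a) (eqP (h a)).
Qed.

Lemma Qn_sym (i : 'I_n) (f : 'I_n -> nat) : s z0 = i ->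
  Qn U z0 i f = (\prod_(a < n) chi a ^+ f a) * Qn U z0 z0 f.
Proof.
move=> hs; rewrite {1}/Qn (reindex tau); last by exists tau' => ? _; [apply: tauK | apply: tauK'].
rewrite /Qn mulr_sumr; apply: eq_big => sg.
  rewrite ffunE -hs permK; congr andb.
  by apply: eq_forallb => a; rewrite cnt_tau.
move=> /andP [/forallP h _]; rewrite Fsg_tau mulrC; congr (_ * _).
by apply: eq_bigr => a _; rewrite -(cnt_tau sg a) (eqP (h a)).
Qed.

End OnePerm.

Hypothesis hsym : forall i : 'I_n, exists s : {perm 'I_n}, exists chi : 'I_n -> C,
  s z0 = i /\ forall a j, U a (s j) = U a j * chi a.

Lemma Q_const (f : 'I_n -> nat) i : Pn U f != 0 -> Qn U z0 i f = Qn U z0 z0 f.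
Proof.
move=> hP; have [s [chi [hs hU]]] := hsym i.
rewrite (Qn_sym hU f hs).
have hP' := Pn_sym hU f.
suff -> : \prod_(a < n) chi a ^+ f a = 1 by rewrite mul1r.
apply/eqP; rewrite -subr_eq0; apply/eqP.
apply: (mulIf hP); rewrite mul0r mulrBl mul1r -hP' subrr //.
Qed.

Lemma P_sumQ (f : 'I_n -> nat) : f z0 = 1%N -> Pn U f = \sum_(i < n) Qn U z0 i f.
Proof.
move=> hf; rewrite /Qn.
under eq_bigr do rewrite big_mkcondr.
rewrite exchange_big /Pn; apply: eq_bigr => sg /forallP h.
rewrite -big_mkcond /= sumr_const.
have -> : #|[pred i | sg i == z0]| = 1%N.
  by move: (eqP (h z0)); rewrite hf /cntn cardsE.
by [].
Qed.

Lemma P_nQ (f : 'I_n -> nat) : f z0 = 1%N -> Pn U f != 0 -> Pn U f = n%:R * Qn U z0 z0 f.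
Proof.
move=> hf hP; rewrite P_sumQ //.
under eq_bigr do rewrite Q_const //.
by rewrite sumr_const card_ord mulr_natl.
Qed.

Lemma ideal_Pn (f : 'I_n -> nat) : ideal_pattern U f -> Pn U f != 0.
Proof.
case/and3P => _ _; apply: contra => /eqP h.
by rewrite /fock_amp; rewrite /Pn /Fsg /cntn in h; rewrite h mul0r.
Qed.

Lemma b0_rel :
  \sum_(s : S | ideal_pattern U (sv s)) normsq (Pn U (sv s)) * (cfac (sv s))%:R =
  n%:R * \sum_(i < n) \sum_(s : S | ideal_pattern U (sv s))
           normsq (Qn U z0 i (sv s)) * (cfac (sv s))%:R.
Proof.
rewrite exchange_big /= mulr_sumr; apply: eq_bigr => s hs.
have hP := ideal_Pn hs; have hz := ideal_z0 hz0 hs.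
rewrite (P_nQ hz hP) normsq_nat.
under eq_bigr do rewrite (Q_const _ hP).
by rewrite sumr_const card_ord -mulr_natl; ring.
Qed.

End Sym.

Section Exist.
Variable R : realType.
Local Notation C := (complex R).
Variables (n : nat) (U : 'M[C]_n) (z0 : 'I_n) (c0 : C).
Hypothesis hz0 : nat_of_ord z0 = 0%N.
Hypothesis hrow : forall b, U z0 b = c0.
Hypothesis hcol : forall j, \sum_(a < n) U a j = if j == z0 then n%:R * c0 else 0.
Hypothesis hc0 : c0 != 0.
Hypothesis hn : (2 < n)%N.
Local Notation sgT := {ffun 'I_n -> 'I_n}.
Local Notation S := {ffun 'I_n -> 'I_n.+1}.

Lemma prod_if (c : pred 'I_n) (u : 'I_n -> C) :
  \prod_(j < n) (if c j then u j else 0) = if [forall j, c j] then \prod_(j < n) u j else 0.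
Proof.
case: ifP => [/forallP h|/negbT]; first by apply: eq_bigr => j _; rewrite h.
rewrite negb_forall => /existsP [j0 /negbTE hj0].
by rewrite (bigD1 j0) //= hj0 mul0r.
Qed.

Definition Phi (i : 'I_n) (sg : sgT) := [forall j, (sg j == z0) == (j == i)].

Lemma class_i (i : 'I_n) :
  \sum_(sg : sgT | Phi i sg) Fsg U sg =
  \prod_(j < n) (if j == i then c0 else \sum_(a < n) U a j - c0).
Proof.
have e : forall j, (if j == i then c0 else \sum_(a < n) U a j - c0) =
    \sum_(a < n) (if (a == z0) == (j == i) then U a j else 0).
  move=> j; rewrite -big_mkcond /=; case: (j == i).
    rewrite (eq_bigl (fun a => a == z0)); last by move=> a; case: (a == z0).
    by rewrite big_pred1_eq hrow.
  rewrite [RHS](eq_bigl (fun a => a != z0)); last by move=> a; case: (a == z0).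
  by rewrite [in LHS](bigD1 z0) //= hrow addrC addrK.
under [RHS]eq_bigr do rewrite e.
rewrite bigA_distr_bigA /= big_mkcond; apply: eq_bigr => sg _.
by rewrite prod_if.
Qed.

Lemma total_ne0 : \sum_(i < n) \sum_(sg : sgT | Phi i sg) Fsg U sg != 0.
Proof.
have [k hk] : exists k, n = k.+2 by exists (n - 2)%N; rewrite -addn2 subnK // ltnW.
under eq_bigr do rewrite class_i.
under eq_bigr do under eq_bigr do rewrite hcol.
have hz : \prod_(j < n) (if j == z0 then c0 else (if j == z0 then n%:R * c0 else 0) - c0)
    = c0 * (- c0) ^+ k.+1.
  rewrite (bigD1 z0) //= eqxx; congr (_ * _).
  rewrite (eq_bigr (fun _ => - c0)); last by move=> j /negbTE ->; rewrite sub0r.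
  by rewrite prodr_const cardC1 card_ord hk.
have hi : forall i, i != z0 ->
    \prod_(j < n) (if j == i then c0 else (if j == z0 then n%:R * c0 else 0) - c0)
    = c0 * ((n%:R * c0 - c0) * (- c0) ^+ k).
  move=> i hiz; rewrite (bigD1 i) //= eqxx; congr (_ * _).
  rewrite (bigD1 z0) /=; last by rewrite eq_sym.
  rewrite eq_sym (negbTE hiz) eqxx; congr (_ * _).
  rewrite (eq_bigr (fun _ => - c0)); last first.
    by move=> j /andP [/negbTE -> /negbTE ->]; rewrite sub0r.
  rewrite prodr_const; congr (_ ^+ _).
  have h1 := cardC1 i; rewrite card_ord in h1.
  have h2 := cardD1 z0 (predC1 i); rewrite h1 !inE eq_sym hiz /= in h2.
  have -> : #|[pred j | (j != i) && (j != z0)]| = #|[predD1 predC1 i & z0]|.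
    by apply: eq_card => j; rewrite !inE andbC.
  move: h2; set X := #|_|; move=> h2; lia.
rewrite (bigD1 z0) //= hz.
rewrite (eq_bigr (fun _ => c0 * ((n%:R * c0 - c0) * (- c0) ^+ k))); last first.
  by move=> i hiz; rewrite hi.
rewrite sumr_const cardC1 card_ord hk /=.
have -> : c0 * (- c0) ^+ k.+1 + c0 * (((k.+2)%:R * c0 - c0) * (- c0) ^+ k) *+ k.+1
    = (- c0) ^+ k * c0 ^+ 2 * (k%:R * (k%:R + 2)).
  rewrite -mulr_natr exprS; ring.
have k0 : (0 < k)%N by move: hn; rewrite hk.
rewrite !mulf_neq0 ?expf_neq0 ?oppr_eq0 //; first by rewrite pnatr_eq0 -lt0n.
have -> : (k%:R + 2 : C) = (k + 2)%:R by rewrite natrD.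
by rewrite pnatr_eq0 addn2.
Qed.

Definition cntS (sg : sgT) : S := [ffun a => inord (cntn sg a)].

Lemma cntn_le (sg : sgT) a : (cntn sg a <= n)%N.
Proof. by rewrite /cntn -[X in (_ <= X)%N]card_ord max_card. Qed.

Lemma val_cntS (sg : sgT) a : nat_of_ord (cntS sg a) = cntn sg a.
Proof. by rewrite ffunE inordK // ltnS cntn_le. Qed.

Lemma card_Phi (sg : sgT) : #|[pred i | Phi i sg]| = (cntn sg z0 == 1%N).
Proof.
have e : forall i, Phi i sg = ([set j | sg j == z0] == [set i]).
  move=> i; apply/forallP/eqP => [h|h].
    by apply/setP => j; rewrite !inE; have := h j => /eqP.
  by move=> j; apply/eqP; move/setP: h => /(_ j); rewrite !inE.
rewrite /cntn; case: cards1P => [[i0 hi0]|hno].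
  rewrite (eq_card (B := pred1 i0)) ?card1 // => i.
  by rewrite !inE e hi0 (inj_eq set1_inj) eq_sym.
apply: eq_card0 => i; rewrite !inE e; apply/negbTE; apply/eqP => h.
by apply: hno; exists i.
Qed.

Lemma exists_ideal : exists s : S, ideal_pattern U (sv s).
Proof.
have h := total_ne0.
have e : \sum_(i < n) \sum_(sg : sgT | Phi i sg) Fsg U sg =
    \sum_(sg : sgT | cntn sg z0 == 1%N) Fsg U sg.
  under eq_bigr do rewrite big_mkcond /=.
  rewrite exchange_big /= [RHS]big_mkcond; apply: eq_bigr => sg _.
  rewrite -big_mkcond /= sumr_const card_Phi.
  by case: (cntn sg z0 == 1%N).
rewrite e (partition_big cntS (fun s : S => nat_of_ord (s z0) == 1%N)) /= in h; last first.
  by move=> sg; rewrite val_cntS.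
have [s hs] : exists s : S, (nat_of_ord (s z0) == 1%N) && (Pn U (sv s) != 0).
  apply/existsP; move: h; apply: contraR; rewrite negb_exists => /forallP hall.
  apply/eqP; apply: big1 => s hs; move: (hall s); rewrite hs /= negbK => /eqP hP0.
  rewrite -[RHS]hP0 /Pn; apply: eq_bigl => sg; rewrite /Fsg.
  apply/andP/forallP => [[_ /eqP <-] a|hf]; first by rewrite /sv val_cntS.
  split; first by rewrite (eqP (hf z0)) /sv.
  by apply/eqP/ffunP => a; apply: ord_inj; rewrite val_cntS (eqP (hf a)).
case/andP: hs => /eqP hs1 hP.
exists s; apply/and3P; split.
- by have [sg hsg] := Pn_witness hP; rewrite (sum_s_of_witness hsg).
- apply/forallP => i; apply/implyP; rewrite (eq_z0 hz0) => /eqP ->.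
  by rewrite /sv hs1.
- rewrite /fock_amp; apply: mulf_neq0; first exact: hP.
  apply: rC_sqrt_neq0; apply: prodn_gt0 => i; exact: fact_gt0.
Qed.

End Exist.

Section RealBound.
Variable R : realType.

Lemma bernoulli (e : R) k : 0 <= e <= 1 -> 1 - k%:R * e <= (1 - e) ^+ k.
Proof.
case/andP=> e0 e1; elim: k => [|k IH]; first by rewrite mul0r subr0 expr0.
rewrite exprS.
have h1 : 0 <= 1 - e by lra.
have h2 : (1 - k%:R * e) * (1 - e) <= (1 - e) * (1 - e) ^+ k.
  by rewrite mulrC ler_wpM2l.
apply: le_trans h2; rewrite -natr1.
have : 0 <= k%:R * e * e by rewrite !mulr_ge0 // ler0n.
nra.
Qed.

Lemma final_bound (nR b0 A1 At Bt eps pn r1 r2 : R) :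
  1 <= nR -> 0 < b0 -> 0 <= At -> 0 <= Bt -> 0 < eps -> eps <= 1 ->
  0 <= pn -> pn <= 1 -> 1 / 2 <= pn * (1 - eps) ->
  0 <= r1 -> r1 <= eps ^+ 2 * At -> 0 <= r2 -> r2 <= eps * Bt ->
  b0 = nR * A1 ->
  `| (eps * pn * A1 + r1) / (pn * (1 - eps) * b0 + r2) - eps / nR |
    <= 2 * (b0 + nR * At + Bt) / (nR * b0) * eps ^+ 2.
Proof.
move=> hn hb0 hAt hBt he0 he1 hp0 hp1 hp2 hr10 hr11 hr20 hr21 hb.
have hA1 : eps * pn * A1 = eps * pn * b0 / nR.
  by rewrite hb; field; apply/eqP => h; move: hn; rewrite h; lra.
rewrite hA1.
set D := pn * (1 - eps) * b0 + r2.
have hD : b0 / 2 <= D.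
  rewrite /D; have : 1 / 2 * b0 <= pn * (1 - eps) * b0 by rewrite ler_wpM2r // ltW.
  lra.
have hD0 : 0 < D by apply: lt_le_trans hD; rewrite divr_gt0.
have hn0 : 0 < nR by lra.
have -> : (eps * pn * b0 / nR + r1) / D - eps / nR =
    (eps ^+ 2 * pn * b0 + nR * r1 - eps * r2) / (nR * D).
  have hDn : D != 0 by rewrite gt_eqF.
  have hnn : nR != 0 by rewrite gt_eqF.
  move: hDn; rewrite /D => hDn; field.
  by rewrite hnn hDn.
rewrite normrM normfV (gtr0_norm (mulr_gt0 hn0 hD0)).
rewrite ler_pdivrMr ?mulr_gt0 //.
have hX : `|eps ^+ 2 * pn * b0 + nR * r1 - eps * r2| <= eps ^+ 2 * (b0 + nR * At + Bt).
  rewrite ler_norml; apply/andP; split.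
    have : eps * r2 <= eps * (eps * Bt) by rewrite ler_wpM2l // ltW.
    have : 0 <= eps ^+ 2 * pn * b0 by rewrite !mulr_ge0 // ?sqr_ge0 // ltW.
    have : 0 <= nR * r1 by rewrite mulr_ge0 // ltW.
    have : 0 <= eps ^+ 2 * b0 by rewrite mulr_ge0 ?sqr_ge0 // ltW.
    have : 0 <= eps ^+ 2 * (nR * At) by rewrite mulr_ge0 ?sqr_ge0 // mulr_ge0 // ltW.
    rewrite expr2; nra.
  have : eps ^+ 2 * pn * b0 <= eps ^+ 2 * b0.
    by rewrite -mulrA ler_wpM2l ?sqr_ge0 // -[X in _ <= X]mul1r ler_wpM2r // ltW.
  have : nR * r1 <= nR * (eps ^+ 2 * At) by rewrite ler_wpM2l // ltW.
  have : 0 <= eps * r2 by rewrite mulr_ge0 // ltW.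
  have : 0 <= eps ^+ 2 * Bt by rewrite mulr_ge0 ?sqr_ge0.
  set e2 := eps ^+ 2; nra.
apply: (le_trans hX).
have hM : 0 <= b0 + nR * At + Bt by rewrite !addr_ge0 // ?mulr_ge0 // ltW.
have : 2 * (b0 + nR * At + Bt) / (nR * b0) * (nR * (b0 / 2)) = b0 + nR * At + Bt.
  have hnn : nR != 0 by rewrite gt_eqF.
  have hbb : b0 != 0 by rewrite gt_eqF.
  by field; rewrite hnn hbb.
move=> e.
have h2 : 0 <= 2 * (b0 + nR * At + Bt) / (nR * b0).
  by rewrite !mulr_ge0 // ?invr_ge0 ?mulr_ge0 // ltW.
have hKD : b0 + nR * At + Bt <= 2 * (b0 + nR * At + Bt) / (nR * b0) * (nR * D).
  rewrite -[X in X <= _]e; exact: (ler_wpM2l h2 (ler_wpM2l (ltW hn0) hD)).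
have -> : 2 * (b0 + nR * At + Bt) / (nR * b0) * eps ^+ 2 * (nR * D) =
  eps ^+ 2 * (2 * (b0 + nR * At + Bt) / (nR * b0) * (nR * D)) by ring.
exact: (ler_wpM2l (sqr_ge0 eps) hKD).
Qed.

End RealBound.

Section Asym.
Variable R : realType.
Variables (n l : nat).
Local Notation labT := {ffun 'I_n -> 'I_l.+1}.
Variables (a b : labT -> R) (pi : 'I_n -> 'I_l.+1 -> R) (al : 'I_n -> R).
Hypothesis hn : (0 < n)%N.
Hypothesis ha0 : a (lab0 n l) = 0.
Hypothesis ha_ge0 : forall lab, 0 <= a lab.
Hypothesis hb_ge0 : forall lab, 0 <= b lab.
Hypothesis hpi : forall i x, 0 <= pi i x <= 1.
Hypothesis hpisum : forall i, \sum_(x < l.+1 | x != ord0) pi i x = 1.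
Hypothesis hal : forall i x, x != ord0 -> a (labx i x) = al i.
Hypothesis hb0 : b (lab0 n l) = n%:R * \sum_(i < n) al i.
Hypothesis hbpos : 0 < b (lab0 n l).

Definition pl (eps : R) (i : 'I_n) (x : 'I_l.+1) : R :=
  if x == ord0 then 1 - eps else eps * pi i x.
Definition w (eps : R) (lab : labT) : R := \prod_(j < n) pl eps j (lab j).
Definition nz (lab : labT) : nat := #|[set j | lab j != ord0]|.

Lemma nz0 (lab : labT) : nz lab = 0%N -> lab = lab0 n l.
Proof.
move/eqP; rewrite cards_eq0 => /eqP hs; apply/ffunP => j; rewrite ffunE.
apply/eqP; apply: contraT => hj.
have : j \in [set j | lab j != ord0] by rewrite inE.
by rewrite hs inE.
Qed.

Lemma labx_i (i : 'I_n) (x : 'I_l.+1) : labx i x i = x.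
Proof. by rewrite ffunE eqxx. Qed.

Lemma nz_labx (i : 'I_n) (x : 'I_l.+1) : nz (labx i x) = (x != ord0).
Proof.
rewrite /nz; case: eqP => [->|/eqP hx].
  by apply/eqP; rewrite cards_eq0; apply/eqP/setP => j; rewrite !inE ffunE; case: ifP.
rewrite (eq_card (B := pred1 i)) ?card1 // => j; rewrite !inE ffunE.
by case: (j == i); rewrite ?hx ?eqxx.
Qed.

Lemma nz1_labx (lab : labT) (i : 'I_n) : nz lab = 1%N -> lab i != ord0 -> lab = labx i (lab i).
Proof.
move=> /eqP /cards1P [k hk] hi; apply/ffunP => j; rewrite ffunE.
have hin : forall j', (lab j' != ord0) = (j' == k).
  by move=> j'; move/setP: hk => /(_ j'); rewrite !inE.
have hki : i = k by apply/eqP; rewrite -hin.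
case: (eqVneq j i) => [->//|hji].
by apply/eqP; move: (hin j); rewrite -hki (negbTE hji) => /negbFE.
Qed.

Lemma sum_single (G : labT -> R) :
  \sum_(lab : labT | nz lab == 1%N) G lab =
  \sum_(i < n) \sum_(x < l.+1 | x != ord0) G (labx i x).
Proof.
have e : forall lab, nz lab = 1%N -> G lab = \sum_(i < n | lab i != ord0) G lab.
  by move=> lab h; rewrite sumr_const -cardsE -/(nz lab) h.
rewrite (eq_bigr (fun lab : labT => \sum_(i < n | lab i != ord0) G lab)); last first.
  by move=> lab /eqP /e.
rewrite (exchange_big_dep xpredT) //=; apply: eq_bigr => i _.
rewrite (reindex_onto (labx i) (fun lab : labT => lab i)); last first.
  by move=> lab /andP [/eqP h1 h2]; rewrite -nz1_labx.
apply: eq_bigl => x; rewrite nz_labx labx_i eqxx andbT.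
by case: (x != ord0).
Qed.

Section Eps.
Variable eps : R.
Hypothesis he0 : 0 < eps.
Hypothesis he1 : eps <= 1.

Lemma pl_ge0 (i : 'I_n) (x : 'I_l.+1) : 0 <= pl eps i x.
Proof.
rewrite /pl; case: ifP => _; first by have := he1; lra.
by case/andP: (hpi i x) => h0 _; rewrite mulr_ge0 // ltW.
Qed.

Lemma pl_le1 (i : 'I_n) (x : 'I_l.+1) : pl eps i x <= 1.
Proof.
rewrite /pl; case: ifP => _; first by have := he0; lra.
case/andP: (hpi i x) => h0 h1.
by rewrite -[1]mulr1 ler_pM // ltW.
Qed.

Lemma pl_le_eps (i : 'I_n) (x : 'I_l.+1) : x != ord0 -> pl eps i x <= eps.
Proof.
move=> hx; rewrite /pl (negbTE hx).
case/andP: (hpi i x) => h0 h1.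
by rewrite -[X in _ <= X]mulr1 ler_wpM2l // ltW.
Qed.

Lemma w_ge0 (lab : labT) : 0 <= w eps lab.
Proof. by apply: prodr_ge0 => j _; apply: pl_ge0. Qed.

Lemma prod_le1 (P : pred 'I_n) (lab : labT) : \prod_(j < n | P j) pl eps j (lab j) <= 1.
Proof. by apply: prodr_ile1 => j _; rewrite pl_ge0 pl_le1. Qed.

Lemma prod_ge0 (P : pred 'I_n) (lab : labT) : 0 <= \prod_(j < n | P j) pl eps j (lab j).
Proof. by apply: prodr_ge0 => j _; apply: pl_ge0. Qed.

Lemma w_lab0 : w eps (lab0 n l) = (1 - eps) ^+ n.
Proof.
rewrite /w (eq_bigr (fun _ => 1 - eps)); first by rewrite prodr_const card_ord.
by move=> j _; rewrite ffunE /pl eqxx.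
Qed.

Lemma w_labx (i : 'I_n) (x : 'I_l.+1) : x != ord0 -> w eps (labx i x) = eps * pi i x * (1 - eps) ^+ n.-1.
Proof.
move=> hx; rewrite /w (bigD1 i) //= labx_i /pl (negbTE hx); congr (_ * _).
rewrite (eq_bigr (fun _ => 1 - eps)); first by rewrite prodr_const cardC1 card_ord.
by move=> j hj; rewrite ffunE (negbTE hj) eqxx.
Qed.

Lemma w_le_eps (lab : labT) : lab != lab0 n l -> w eps lab <= eps.
Proof.
move=> hl.
have [j hj] : exists j, lab j != ord0.
  apply/existsP; apply: contraR hl; rewrite negb_exists => /forallP h.
  by apply/eqP/ffunP => j; rewrite ffunE; move/negPn: (h j) => /eqP.
rewrite /w (bigD1 j) //=.
rewrite -[X in _ <= X]mulr1 ler_pM ?pl_ge0 ?prod_ge0 ?pl_le_eps ?prod_le1 //.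
Qed.

Lemma w_le_eps2 (lab : labT) : nz lab != 1%N -> lab != lab0 n l -> w eps lab <= eps ^+ 2.
Proof.
move=> h1 h0.
have hgt : (1 < nz lab)%N.
  case: (ltngtP (nz lab) 1) => //; last by move/eqP; rewrite (negbTE h1).
  by rewrite ltnS leqn0 => /eqP /nz0 e; rewrite e eqxx in h0.
case/card_gt1P: hgt => j1 [j2 [hj1 hj2 hne]]; rewrite !inE in hj1 hj2.
rewrite /w (bigD1 j1) //= (bigD1 j2) /=; last by rewrite eq_sym.
rewrite expr2 mulrA -[X in _ <= X]mulr1.
rewrite ler_pM ?mulr_ge0 ?pl_ge0 ?prod_ge0 ?prod_le1 //.
rewrite ler_pM ?pl_ge0 ?pl_le_eps //.
Qed.

Definition Nsum := \sum_(lab : labT) w eps lab * a lab.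
Definition Dsum := \sum_(lab : labT) w eps lab * b lab.

Lemma N_dec : exists r1, Nsum = eps * (1 - eps) ^+ n.-1 * \sum_(i < n) al i + r1 /\
  0 <= r1 <= eps ^+ 2 * \sum_(lab : labT) a lab.
Proof.
exists (\sum_(lab : labT | nz lab != 1%N) w eps lab * a lab); split.
  rewrite /Nsum (bigID (fun lab => nz lab == 1%N)) /=; congr (_ + _).
  rewrite sum_single mulr_sumr; apply: eq_bigr => i _.
  rewrite (eq_bigr (fun x => eps * (1 - eps) ^+ n.-1 * al i * pi i x)).
    by rewrite -mulr_sumr hpisum mulr1.
  by move=> x hx; rewrite w_labx // hal //; ring.
apply/andP; split; first by apply: sumr_ge0 => lab _; rewrite mulr_ge0 ?w_ge0.
rewrite mulr_sumr [X in _ <= X](bigID (fun lab => nz lab != 1%N)) /=.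
rewrite -[X in X <= _]addr0 lerD //; last first.
  by apply: sumr_ge0 => lab _; rewrite mulr_ge0 ?sqr_ge0.
apply: ler_sum => lab hl.
case: (eqVneq lab (lab0 n l)) => [->|h0]; first by rewrite ha0 !mulr0.
by rewrite ler_wpM2r // w_le_eps2.
Qed.

Lemma D_dec : exists r2, Dsum = (1 - eps) ^+ n * b (lab0 n l) + r2 /\
  0 <= r2 <= eps * \sum_(lab : labT) b lab.
Proof.
exists (\sum_(lab : labT | lab != lab0 n l) w eps lab * b lab); split.
  by rewrite /Dsum (bigD1 (lab0 n l)) //= w_lab0.
apply/andP; split; first by apply: sumr_ge0 => lab _; rewrite mulr_ge0 ?w_ge0.
rewrite mulr_sumr [X in _ <= X](bigD1 (lab0 n l)) //=.
rewrite -[X in X <= _]add0r lerD //; first by rewrite mulr_ge0 // ltW.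
by apply: ler_sum => lab hl; rewrite ler_wpM2r // w_le_eps.
Qed.

End Eps.

Theorem asym_main : exists K delta : R, 0 < delta /\
  forall eps : R, 0 < eps < delta ->
  `| Nsum eps / Dsum eps - eps / n%:R | <= K * eps ^+ 2.
Proof.
set At := \sum_(lab : labT) a lab.
set Bt := \sum_(lab : labT) b lab.
set b0 := b (lab0 n l).
exists (2 * (b0 + n%:R * At + Bt) / (n%:R * b0) * 1), (1 / (2 * n%:R)).
have hnR : 1 <= (n%:R : R) by rewrite ler1n.
split; first by rewrite divr_gt0 // mulr_gt0 // ltr0n.
move=> eps /andP [he0 he1].
have he1' : eps <= 1.
  apply: (le_trans (ltW he1)); rewrite ler_pdivrMr ?mulr_gt0 ?ltr0n //; lra.
have [r1 [hN hr1]] := N_dec he0 he1'.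
have [r2 [hD hr2]] := D_dec he0 he1'.
have hAt : 0 <= At by apply: sumr_ge0.
have hBt : 0 <= Bt by apply: sumr_ge0.
have hpn0 : 0 <= (1 - eps) ^+ n.-1 by apply: exprn_ge0; lra.
have hpn1 : (1 - eps) ^+ n.-1 <= 1 by apply: exprn_ile1; lra.
have hpn2 : 1 / 2 <= (1 - eps) ^+ n.-1 * (1 - eps).
  rewrite -exprSr prednK //.
  apply: le_trans (bernoulli _ _); last by rewrite ltW //=; lra.
  have : n%:R * eps <= 1 / 2.
    move: he1; rewrite ler_pdivlMr ?mulr_gt0 ?ltr0n // => h.
    by apply: ltW; move: h; rewrite ltr_pdivlMr ?mulr_gt0 ?ltr0n //; lra.
  lra.
rewrite mulr1 hN hD.
have -> : (1 - eps) ^+ n = (1 - eps) ^+ n.-1 * (1 - eps) by rewrite -exprSr prednK.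
case/andP: hr1 => hr10 hr11; case/andP: hr2 => hr20 hr21.
apply: final_bound => //.
Qed.

End Asym.

Section Final.
Variable R : realType.
Local Notation C := (complex R).
Variable ns : seq nat.
Hypothesis hall2 : all (fun m => 2 <= m)%N ns.
Hypothesis hN : (2 < \prod_(m <- ns) m)%N.
Local Notation N := (\prod_(m <- ns) m)%N.
Local Notation U := (fourier_tensor R ns).

Lemma hallpos : all (fun m => 0 < m)%N ns.
Proof. by apply: sub_all hall2 => m /ltnW. Qed.

Lemma N_gt0 : (0 < N)%N.
Proof. by apply: leq_trans hN. Qed.

Definition z0 : 'I_N := Ordinal N_gt0.
Lemma hz0 : nat_of_ord z0 = 0%N. Proof. by []. Qed.

Lemma UE (a b : 'I_N) : U a b = T R ns a b.
Proof. by rewrite mxE. Qed.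

Lemma hrow b : U z0 b = c0 R ns.
Proof. by rewrite UE T_0j. Qed.

Lemma hcol j : \sum_(a < N) U a j = if j == z0 then N%:R * c0 R ns else 0.
Proof.
rewrite (eq_bigr (fun a : 'I_N => T R ns a j)); last by move=> a _; rewrite UE.
have := rowsumT R hallpos (ltn_ord j); rewrite /prodn => ->.
by congr (if _ then _ else _); apply/eqP/eqP => [h|->//]; apply: ord_inj.
Qed.

Lemma hsym : forall i : 'I_N, exists s : {perm 'I_N}, exists chi : 'I_N -> C,
  s z0 = i /\ forall a j, U a (s j) = U a j * chi a.
Proof.
move=> i.
pose f := fun j : 'I_N => Ordinal (sh_lt i j hallpos : (sh ns i j < N)%N).
have finj : injective f.
  move=> j j' /(congr1 (@nat_of_ord _)) /= e; apply: ord_inj.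
  exact: (sh_inj hallpos (ltn_ord j) (ltn_ord j') e).
exists (perm finj), (fun a => chi R ns i a); split.
  by apply: ord_inj; rewrite permE /= sh_0 // hallpos.
by move=> a j; rewrite permE !UE /= T_sh // hallpos.
Qed.

Section Model.
Variables (l : nat) (pi : 'I_N -> 'I_l.+1 -> R).
Hypothesis hpi : forall i x, 0 <= pi i x <= 1.
Hypothesis hpisum : forall i, \sum_(x < l.+1 | x != ord0) pi i x = 1.

Definition aa (lab : {ffun 'I_N -> 'I_l.+1}) : R :=
  \sum_(occ | success U occ && mode0_error occ) outcome_prob U lab occ.
Definition bb (lab : {ffun 'I_N -> 'I_l.+1}) : R :=
  \sum_(occ | success U occ) outcome_prob U lab occ.
Definition al (i : 'I_N) : R :=
  \sum_(s | ideal_pattern U (sv s)) normsq (Qn U z0 i (sv s)) * (cfac (sv s))%:R.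

Lemma prob_ge0 (lab : {ffun 'I_N -> 'I_l.+1}) occ : 0 <= outcome_prob U lab occ.
Proof. by rewrite /outcome_prob mulr_ge0 ?normsq_ge0 ?ler0n. Qed.

Lemma model_main : exists K delta : R, 0 < delta /\
  forall eps : R, 0 < eps < delta ->
  `| error_rate U (pl pi eps) - eps / N%:R | <= K * eps ^+ 2.
Proof.
have hb0 : bb (lab0 N l) = N%:R * \sum_(i < N) al i.
  by rewrite /bb (G0 l U hz0) (b0_rel hz0 hsym).
have hbpos : 0 < bb (lab0 N l).
  rewrite /bb (G0 l U hz0).
  have [s hs] := exists_ideal hz0 hrow hcol (c0_neq0 R hallpos) hN.
  rewrite (bigD1 s) //=.
  have h1 : 0 < normsq (Pn U (sv s)) * (cfac (sv s))%:R.
    rewrite mulr_gt0 // ?ltr0n; last by apply: prodn_gt0 => a; exact: fact_gt0.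
    rewrite lt_def normsq_ge0 andbT normsq_eq0.
    exact: (ideal_Pn hs).
  apply: (lt_le_trans h1); rewrite lerDl.
  by apply: sumr_ge0 => s' _; rewrite mulr_ge0 ?normsq_ge0 ?ler0n.
have := @asym_main R N l aa bb pi al N_gt0 (Ga0 l U)
  (fun lab => sumr_ge0 _ (fun occ _ => prob_ge0 lab occ))
  (fun lab => sumr_ge0 _ (fun occ _ => prob_ge0 lab occ))
  hpi hpisum (fun i x hx => G1 U hz0 i hx) hb0 hbpos.
by [].
Qed.

End Model.

End Final.

Lemma eq_ord0 m (x : 'I_m.+1) : (x == ord0) = (nat_of_ord x == 0%N).
Proof. by []. Qed.

Theorem theorem1 (R : realType) (ns : seq nat) :
  all (fun m => 2 <= m)%N ns ->
  (2 < \prod_(m <- ns) m)%N ->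
  (forall Rp : nat, (1 <= Rp)%N ->
     exists K delta : R, 0 < delta /\
       forall eps : R, 0 < eps < delta ->
         `| error_rate (fourier_tensor R ns) (urs_dist Rp eps)
            - eps / (\prod_(m <- ns) m)%N%:R | <= K * eps ^+ 2)
  /\
  (exists K delta : R, 0 < delta /\
       forall eps : R, 0 < eps < delta ->
         `| error_rate (fourier_tensor R ns) (obb_dist eps)
            - eps / (\prod_(m <- ns) m)%N%:R | <= K * eps ^+ 2).
Proof.
move=> h2 hN; split.
  move=> Rp hRp.
  have hRp' : (0 : R) < Rp%:R by rewrite ltr0n.
  have hpi : forall (i : 'I_(\prod_(m <- ns) m)) (x : 'I_Rp.+1),
      0 <= (fun _ _ => (Rp%:R : R)^-1) i x <= 1.
    by move=> i x; rewrite invr_ge0 ltW //= invr_le1 // ?ler1n // unitfE gt_eqF.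
  have hpisum : forall i : 'I_(\prod_(m <- ns) m),
      \sum_(x < Rp.+1 | x != ord0) (fun _ _ => (Rp%:R : R)^-1) i x = 1.
    move=> i; rewrite sumr_const cardC1 card_ord /= -[_ *+ Rp]mulr_natr mulVf // gt_eqF //.

  have [K [d [hd H]]] := model_main h2 hN hpi hpisum.
  exists K, d; split => // eps he.
set N := (\prod_(m <- ns) m)%N.
pose pio := fun (i : 'I_N) (x : 'I_N.+1) => if nat_of_ord x == (nat_of_ord i).+1 then (1 : R) else 0.
have hpi : forall i x, 0 <= pio i x <= 1.
  by move=> i x; rewrite /pio; case: ifP; rewrite ?lexx ?ler01.
have hpisum : forall i, \sum_(x < N.+1 | x != ord0) pio i x = 1.
  move=> i; rewrite (bigD1 (inord (nat_of_ord i).+1)) /=; last first.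
    by rewrite eq_ord0 inordK // ltnS ltn_ord.
  rewrite /pio inordK ?ltnS ?ltn_ord // eqxx big1 ?addr0 // => x /andP [_ hx].
  case: eqP => // hxi; move: hx; rewrite -hxi; case/negP.
  by apply/eqP/ord_inj; rewrite inordK // hxi ltnS ltn_ord.
have [K [d [hd H]]] := model_main h2 hN hpi hpisum.
exists K, d; split => // eps he.
have -> : obb_dist eps = pl pio eps.
  apply: functional_extensionality => i; apply: functional_extensionality => x.
  rewrite /obb_dist /pl /pio eq_ord0; case: ifP => // _.
  by case: ifP; rewrite ?mulr1 ?mulr0.
exact: H.
Qed.
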